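(* Let $v$ and $\tilde v$ be quadratic vector fields on $\mathbb{C}^2$, each having exactly four singular points in $\mathbb{C}^2$, all of them non-degenerate. If $v$ and $\tilde v$ have the same spectra of singularities, then there is an affine map $T$ of $\mathbb{C}^2$ such that the transform $T_*\tilde v$ either equals $v$ or is a twin vector field of $v$. Moreover, there is a nonempty Zariski-open subset $U$ of the space $\mathcal{A}_2$ of quadratic vector fields such that every $v\in U$ has exactly one twin vector field.
   Context: A quadratic vector field on $\mathbb{C}^2$ is $v=P\,\partial_x+Q\,\partial_y$ with $P,Q\in\mathbb{C}[x,y]$ of degree at most $2$; $\mathcal{A}_2$ denotes the (12-dimensional) vector space of these. A singular point is a common zero $p$ of $P,Q$. It is non-degenerate if $\det Dv(p)\neq 0$, where $Dv(p)=\begin{pmatrix}P_x&P_y\\Q_x&Q_y\end{pmatrix}(p)$. The spectrum of $v$ at $p$ is the ordered pair $(\operatorname{tr}Dv(p),\det Dv(p))$. Two such vector fields have the same spectra of singularities if the multisets $\{(\operatorname{tr}Dv(p),\det Dv(p)) : p\in \mathrm{Sing}(v)\}$ coincide, where positions of the singular points are not taken into account. For an affine map $T$ of $\mathbb{C}^2$, $T_*v(x,y)=DT\cdot v(T^{-1}(x,y))$. Two vector fields are affine equivalent if one is $T_*$ of the other for some affine $T$. Two vector fields $v_1,v_2$ with isolated singularities are twin vector fields if $v_1\neq v_2$, they have exactly the same singular set, and for each common singular point $p$ the matrices $Dv_1(p)$ and $Dv_2(p)$ have the same trace and determinant. *)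

(* Defs.v *)
(* The complex plane C^2 is modelled as R * R for an arbitrary
   algebraically closed field R of characteristic 0 (C is such a field). *)
From HB Require Import structures.
From mathcomp Require Import all_boot all_order all_algebra.
Set Implicit Arguments. Unset Strict Implicit. Unset Printing Implicit Defensive.
Import Order.TTheory GRing.Theory.
Local Open Scope ring_scope.

Section QVF.
Variable R : closedFieldType.

(* A_2: quadratic vector field v = P d/dx + Q d/dy, coded by its 12 coefficients
   P = c0 + c1 x + c2 y + c3 x^2 + c4 x y + c5 y^2,
   Q = c6 + c7 x + c8 y + c9 x^2 + c10 x y + c11 y^2. *)
Definition qvf := 'rV[R]_12.

Definition coef (v : qvf) (k : nat) : R := v ord0 (inord k).

Definition vP (v : qvf) (p : R * R) : R :=
  let: (x, y) := p in
  coef v 0 + coef v 1 * x + coef v 2 * y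
  + coef v 3 * x ^+ 2 + coef v 4 * x * y + coef v 5 * y ^+ 2.

Definition vQ (v : qvf) (p : R * R) : R :=
  let: (x, y) := p in
  coef v 6 + coef v 7 * x + coef v 8 * y
  + coef v 9 * x ^+ 2 + coef v 10 * x * y + coef v 11 * y ^+ 2.

Definition vPx (v : qvf) (p : R * R) : R :=
  coef v 1 + 2%:R * coef v 3 * p.1 + coef v 4 * p.2.
Definition vPy (v : qvf) (p : R * R) : R :=
  coef v 2 + coef v 4 * p.1 + 2%:R * coef v 5 * p.2.
Definition vQx (v : qvf) (p : R * R) : R :=
  coef v 7 + 2%:R * coef v 9 * p.1 + coef v 10 * p.2.
Definition vQy (v : qvf) (p : R * R) : R :=
  coef v 8 + coef v 10 * p.1 + 2%:R * coef v 11 * p.2.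

Definition trD (v : qvf) (p : R * R) : R := vPx v p + vQy v p.
Definition detD (v : qvf) (p : R * R) : R := vPx v p * vQy v p - vPy v p * vQx v p.
Definition spectrum (v : qvf) (p : R * R) : R * R := (trD v p, detD v p).

Definition singular (v : qvf) (p : R * R) : Prop := vP v p = 0 /\ vQ v p = 0.

Definition sing_list (v : qvf) (s : seq (R * R)) : Prop :=
  uniq s /\ forall p, singular v p <-> p \in s.

Definition four_nondeg_sing (v : qvf) : Prop :=
  exists s, sing_list v s /\ size s = 4%N /\ forall p, p \in s -> detD v p != 0.

Definition same_spectra (v w : qvf) : Prop :=
  exists s t, sing_list v s /\ sing_list w t /\
    perm_eq (map (spectrum v) s) (map (spectrum w) t).

(* isolated singularities (for polynomial fields on the plane: finite singular set) *)
Definition isolated_sing (v : qvf) : Prop := exists s, sing_list v s.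

Definition twin (v1 v2 : qvf) : Prop :=
  v1 <> v2 /\ isolated_sing v1 /\ isolated_sing v2 /\
  (forall p, singular v1 p <-> singular v2 p) /\
  (forall p, singular v1 p -> trD v1 p = trD v2 p /\ detD v1 p = detD v2 p).

Definition affT (a b c d e f : R) (p : R * R) : R * R :=
  (a * p.1 + b * p.2 + e, c * p.1 + d * p.2 + f).

Definition is_pushforward (a b c d e f : R) (v w : qvf) : Prop :=
  forall p, vP w (affT a b c d e f p) = a * vP v p + b * vQ v p /\
            vQ w (affT a b c d e f p) = c * vP v p + d * vQ v p.

(* polynomials in the 12 coordinates of A_2: lists of (coefficient, exponent vector) *)
Definition mpoly12 := seq (R * {ffun 'I_12 -> nat}).
Definition meval (f : mpoly12) (v : qvf) : R :=
  \sum_(m <- f) m.1 * \prod_(i < 12) v ord0 i ^+ m.2 i.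

(* Zariski-open subsets of A_2: complements of common zero sets of finitely many polynomials *)
Definition zariski_open (U : qvf -> Prop) : Prop :=
  exists fs : seq mpoly12, forall v, U v <-> exists2 f, f \in fs & meval f v != 0.

End QVF.

(* Main.v *)
Require Import Defs.
From HB Require Import structures.
From mathcomp Require Import all_boot all_order all_algebra ring zify.
From mathcomp Require Import separable.
Set Implicit Arguments. Unset Strict Implicit. Unset Printing Implicit Defensive.
Import GRing.Theory.
Local Open Scope ring_scope.

Section Work.
Variable R : closedFieldType.
Hypothesis charR0 : [pchar R] =i pred0.

Lemma natr_neq0 n : (n.+1%:R : R) != 0.
Proof. by have /pcharf0P -> := charR0. Qed.

Lemma two_neq0 : (2%:R : R) != 0. Proof. exact: natr_neq0. Qed.

Definition mkq (g : nat -> R) : qvf R := \row_(i < 12) g i.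
Lemma coef_mkq g k : (k < 12)%N -> coef (mkq g) k = g k.
Proof. by move=> hk; rewrite /coef /mkq mxE inordK. Qed.

Lemma qvf_coefP (v w : qvf R) : (forall k, (k < 12)%N -> coef v k = coef w k) -> v = w.
Proof.
move=> H; apply/rowP => i.
by have := H i (ltn_ord i); rewrite /coef inord_val => ->.
Qed.

Lemma twice0 (d : R) : 2%:R * d = 0 -> d = 0.
Proof. by move/eqP; rewrite mulf_eq0 (negPf two_neq0) /= => /eqP. Qed.

Lemma quad_zero (c : nat -> R) :
  (forall x y : R, c 0%N + c 1%N * x + c 2%N * y + c 3%N * x ^+ 2 + c 4%N * x * y + c 5%N * y ^+ 2 = 0) ->
  forall k, (k < 6)%N -> c k = 0.
Proof.
move=> H.
pose f := fun x y : R => c 0%N + c 1%N * x + c 2%N * y + c 3%N * x ^+ 2 + c 4%N * x * y + c 5%N * y ^+ 2.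
have {}H : forall x y, f x y = 0 by exact: H.
have h0 : c 0%N = 0 by transitivity (f 0 0); [rewrite /f; ring | exact: H].
have h1 : c 1%N = 0.
  by apply: twice0; transitivity (f 1 0 - f (-1) 0); [rewrite /f; ring | rewrite !H subr0].
have h3 : c 3%N = 0.
  by apply: twice0; transitivity (f 1 0 + f (-1) 0 - 2%:R * f 0 0); [rewrite /f; ring | rewrite !H; ring].
have h2 : c 2%N = 0.
  by apply: twice0; transitivity (f 0 1 - f 0 (-1)); [rewrite /f; ring | rewrite !H subr0].
have h5 : c 5%N = 0.
  by apply: twice0; transitivity (f 0 1 + f 0 (-1) - 2%:R * f 0 0); [rewrite /f; ring | rewrite !H; ring].
have h4 : c 4%N = 0.
  transitivity (f 1 1 - f 0 0 - c 1%N - c 3%N - c 2%N - c 5%N); first by rewrite /f; ring.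
  by rewrite !H h1 h2 h3 h5; ring.
by case=> [|[|[|[|[|[|]]]]]].
Qed.

Lemma qvf_funP (v w : qvf R) :
  (forall p, vP v p = vP w p /\ vQ v p = vQ w p) -> v = w.
Proof.
move=> H; apply: qvf_coefP => k hk.
have hP := @quad_zero (fun i => coef v i - coef w i).
have hQ := @quad_zero (fun i => coef v (i + 6) - coef w (i + 6)).
have: forall i, (i < 12)%N -> coef v i - coef w i = 0.
  move=> i hi; case: (ltnP i 6) => hi6.
    apply: hP => // x y; have [e _] := H (x, y).
    by transitivity (vP v (x,y) - vP w (x,y)); [rewrite /vP /=; ring | rewrite e subrr].
  have -> : i = ((i - 6) + 6)%N by rewrite subnK.
  apply: hQ; last by rewrite ltn_subLR.
  move=> x y; have [_ e] := H (x, y).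
  by transitivity (vQ v (x,y) - vQ w (x,y)); [rewrite /vQ /=; ring | rewrite e subrr].
by move/(_ k hk)/eqP; rewrite subr_eq0 => /eqP.
Qed.

Definition csub (g : nat -> R) (s1 s2 s3 s4 s5 s6 : R) (k : nat) : R :=
  match k with
  | 0 => g 0%N + g 1%N * s5 + g 2%N * s6 + g 3%N * s5 ^+ 2 + g 4%N * s5 * s6 + g 5%N * s6 ^+ 2
  | 1 => g 1%N * s1 + g 2%N * s3 + 2%:R * g 3%N * s1 * s5 + g 4%N * (s1 * s6 + s3 * s5) + 2%:R * g 5%N * s3 * s6
  | 2 => g 1%N * s2 + g 2%N * s4 + 2%:R * g 3%N * s2 * s5 + g 4%N * (s2 * s6 + s4 * s5) + 2%:R * g 5%N * s4 * s6
  | 3 => g 3%N * s1 ^+ 2 + g 4%N * s1 * s3 + g 5%N * s3 ^+ 2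
  | 4 => 2%:R * g 3%N * s1 * s2 + g 4%N * (s1 * s4 + s2 * s3) + 2%:R * g 5%N * s3 * s4
  | _ => g 3%N * s2 ^+ 2 + g 4%N * s2 * s4 + g 5%N * s4 ^+ 2
  end.

Definition cmp (a11 a12 a21 a22 s1 s2 s3 s4 s5 s6 : R) (v : qvf R) : qvf R :=
  let P := coef v in let Q := fun i => coef v (i + 6) in
  mkq (fun k => if (k < 6)%N then a11 * csub P s1 s2 s3 s4 s5 s6 k + a12 * csub Q s1 s2 s3 s4 s5 s6 k
                else a21 * csub P s1 s2 s3 s4 s5 s6 (k - 6) + a22 * csub Q s1 s2 s3 s4 s5 s6 (k - 6)).

Section Cmp.
Variables (a11 a12 a21 a22 s1 s2 s3 s4 s5 s6 : R) (v : qvf R).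
Let w := cmp a11 a12 a21 a22 s1 s2 s3 s4 s5 s6 v.
Let S := affT s1 s2 s3 s4 s5 s6.

Lemma cmpP p : vP w p = a11 * vP v (S p) + a12 * vQ v (S p).
Proof. by case: p => x y; rewrite /w /S /vP /vQ /affT /cmp !coef_mkq //=; ring. Qed.
Lemma cmpQ p : vQ w p = a21 * vP v (S p) + a22 * vQ v (S p).
Proof. by case: p => x y; rewrite /w /S /vP /vQ /affT /cmp !coef_mkq //=; ring. Qed.
Lemma cmpPx p : vPx w p = a11 * (vPx v (S p) * s1 + vPy v (S p) * s3) + a12 * (vQx v (S p) * s1 + vQy v (S p) * s3).
Proof. by case: p => x y; rewrite /w /S /vPx /vPy /vQx /vQy /affT /cmp !coef_mkq //=; ring. Qed.
Lemma cmpPy p : vPy w p = a11 * (vPx v (S p) * s2 + vPy v (S p) * s4) + a12 * (vQx v (S p) * s2 + vQy v (S p) * s4).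
Proof. by case: p => x y; rewrite /w /S /vPx /vPy /vQx /vQy /affT /cmp !coef_mkq //=; ring. Qed.
Lemma cmpQx p : vQx w p = a21 * (vPx v (S p) * s1 + vPy v (S p) * s3) + a22 * (vQx v (S p) * s1 + vQy v (S p) * s3).
Proof. by case: p => x y; rewrite /w /S /vPx /vPy /vQx /vQy /affT /cmp !coef_mkq //=; ring. Qed.
Lemma cmpQy p : vQy w p = a21 * (vPx v (S p) * s2 + vPy v (S p) * s4) + a22 * (vQx v (S p) * s2 + vQy v (S p) * s4).
Proof. by case: p => x y; rewrite /w /S /vPx /vPy /vQx /vQy /affT /cmp !coef_mkq //=; ring. Qed.
End Cmp.

Section Push.
Variables (a b c d e f : R).
Hypothesis hd : a * d - b * c != 0.
Let dl := a * d - b * c.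
Definition si1 := d / (a * d - b * c).
Definition si2 := - b / (a * d - b * c).
Definition si3 := - c / (a * d - b * c).
Definition si4 := a / (a * d - b * c).
Definition si5 := (b * f - d * e) / (a * d - b * c).
Definition si6 := (c * e - a * f) / (a * d - b * c).
Definition pushw (v : qvf R) := cmp a b c d si1 si2 si3 si4 si5 si6 v.
Let T := affT a b c d e f.
Let S := affT si1 si2 si3 si4 si5 si6.

Lemma ST p : S (T p) = p.
Proof. case: p => x y; rewrite /S /T /affT /si1 /si2 /si3 /si4 /si5 /si6 /=; congr (_, _); field; exact: hd. Qed.
Lemma TS p : T (S p) = p.
Proof. case: p => x y; rewrite /S /T /affT /si1 /si2 /si3 /si4 /si5 /si6 /=; congr (_, _); field; exact: hd. Qed.

Lemma pf_exists v : is_pushforward a b c d e f v (pushw v).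
Proof. by move=> p; rewrite /pushw cmpP cmpQ -/S ST. Qed.

Lemma pf_unique v w : is_pushforward a b c d e f v w -> w = pushw v.
Proof.
move=> H; apply: qvf_funP => q; rewrite /pushw cmpP cmpQ -/S.
by have [<- <-] := H (S q); rewrite -/T TS.
Qed.

Lemma pf_sing v w p : is_pushforward a b c d e f v w -> (singular w (T p) <-> singular v p).
Proof.
move=> /(_ p) [e1 e2]; rewrite /singular -/T e1 e2; split => [[h1 h2]|[-> ->]]; last by rewrite !mulr0 !addr0.
have : d * (a * vP v p + b * vQ v p) - b * (c * vP v p + d * vQ v p) = 0 by rewrite h1 h2; ring.
have : - c * (a * vP v p + b * vQ v p) + a * (c * vP v p + d * vQ v p) = 0 by rewrite h1 h2; ring.
move=> E2 E1; split.
  by apply/eqP; rewrite -(mulIr_eq0 _ (mulIf hd)) /=; apply/eqP; rewrite -E1; ring.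
by apply/eqP; rewrite -(mulIr_eq0 _ (mulIf hd)) /=; apply/eqP; rewrite -E2; ring.
Qed.

Lemma pf_trdet v w p : is_pushforward a b c d e f v w ->
  trD w (T p) = trD v p /\ detD w (T p) = detD v p.
Proof.
move=> /pf_unique ->; rewrite /trD /detD /pushw cmpPx cmpPy cmpQx cmpQy -/S ST.
rewrite /si1 /si2 /si3 /si4; split; field; exact: hd.
Qed.
End Push.

End Work.

Section Work.
Variable R : closedFieldType.
Hypothesis charR0 : [pchar R] =i pred0.
Lemma natr_inj n m : (n%:R : R) = m%:R -> n = m.
Proof.
have /pcharf0P hc := charR0.
move=> E; case: (ltngtP n m) => // h.
  by have := hc (m - n)%N; rewrite natrB ?(ltnW h) // E subrr eqxx subn_eq0 leqNgt h.
by have := hc (n - m)%N; rewrite natrB ?(ltnW h) // E subrr eqxx subn_eq0 leqNgt h.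
Qed.

Definition cross (p q r : R * R) := (q.1 - p.1) * (r.2 - p.2) - (q.2 - p.2) * (r.1 - p.1).

Lemma quad3 (A B C k : R) : k != 0 -> k != 1 ->
  A = 0 -> A + B + C = 0 -> A + B * k + C * k ^+ 2 = 0 -> B = 0 /\ C = 0.
Proof.
move=> k0 k1 hA h1 hk.
have hC : C = 0.
  have : k * (k - 1) * C = 0 by rewrite -[RHS](subr0 0) -{1}hk -[X in _ = _ - X](mulr0 k) -{1}h1 hA; ring.
  by move/eqP; rewrite !mulf_eq0 (negPf k0) subr_eq0 (negPf k1) /= => /eqP.
by split => //; move: h1; rewrite hA hC add0r addr0.
Qed.

Definition lpt (p : R * R) (u1 u2 k : R) : R * R := (p.1 + k * u1, p.2 + k * u2).

Lemma quad_line (v : qvf R) p u1 u2 k : vP v (lpt p u1 u2 k) =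
  vP v p + (vPx v p * u1 + vPy v p * u2) * k + (coef v 3 * u1 ^+ 2 + coef v 4 * u1 * u2 + coef v 5 * u2 ^+ 2) * k ^+ 2.
Proof. by case: p => x y; rewrite /lpt /vP /vPx /vPy /=; ring. Qed.
Lemma quad_lineQ (v : qvf R) p u1 u2 k : vQ v (lpt p u1 u2 k) =
  vQ v p + (vQx v p * u1 + vQy v p * u2) * k + (coef v 9 * u1 ^+ 2 + coef v 10 * u1 * u2 + coef v 11 * u2 ^+ 2) * k ^+ 2.
Proof. by case: p => x y; rewrite /lpt /vQ /vQx /vQy /=; ring. Qed.

Lemma line_sing (v : qvf R) p u1 u2 k : k != 0 -> k != 1 ->
  singular v p -> singular v (lpt p u1 u2 1) -> singular v (lpt p u1 u2 k) ->
  forall t, singular v (lpt p u1 u2 t).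
Proof.
move=> k0 k1 [h1 h2] [h3 h4] [h5 h6] t.
move: h3 h5; rewrite !quad_line expr1n !mulr1 => h3 h5.
have [hB hC] := quad3 k0 k1 h1 h3 h5.
move: h4 h6; rewrite !quad_lineQ expr1n !mulr1 => h4 h6.
have [hB' hC'] := quad3 k0 k1 h2 h4 h6.
by split; rewrite ?quad_line ?quad_lineQ ?hB ?hC ?h1 ?hB' ?hC' ?h2; ring.
Qed.

Lemma lpt_inj p u1 u2 k k' : (u1, u2) != (0, 0) -> lpt p u1 u2 k = lpt p u1 u2 k' -> k = k'.
Proof.
move=> hu [e1 e2].
have E1 : (k - k') * u1 = 0 by rewrite mulrBl (addrI _ e1) subrr.
have E2 : (k - k') * u2 = 0 by rewrite mulrBl (addrI _ e2) subrr.
apply/eqP; rewrite -subr_eq0; apply/eqP.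
case: (eqVneq u1 0) => h1; last by move/eqP: E1; rewrite mulf_eq0 (negPf h1) orbF => /eqP.
case: (eqVneq u2 0) => h2; last by move/eqP: E2; rewrite mulf_eq0 (negPf h2) orbF => /eqP.
by move: hu; rewrite h1 h2 eqxx.
Qed.

Lemma gen_pos (v : qvf R) s p q r : sing_list v s -> size s = 4%N ->
  p \in s -> q \in s -> r \in s -> p != q -> r != p -> r != q -> cross p q r != 0.
Proof.
move=> [us Hs] s4 ps qs rs pq rp rq; apply/negP => /eqP hc.
pose u1 := q.1 - p.1; pose u2 := q.2 - p.2.
have hp : p = lpt p u1 u2 0 by rewrite /lpt !mul0r !addr0; case: (p).
have hq : q = lpt p u1 u2 1 by rewrite /lpt !mul1r /u1 /u2 !subrKC; case: (q).
have hu : (u1, u2) != (0, 0).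
  apply: contra pq => /eqP h; move: (congr1 fst h) (congr1 snd h) => /= h1 h2.
  by apply/eqP; rewrite [q]hq /lpt h1 h2 !mulr0 !addr0; case: (p).
have [k hk] : exists k, r = lpt p u1 u2 k.
  case: (eqVneq u1 0) => h1.
    have h2 : u2 != 0 by apply: contra hu => /eqP ->; rewrite h1.
    exists ((r.2 - p.2) / u2); rewrite /lpt divfK //.
    have : u2 * (r.1 - p.1) = 0.
      by rewrite -[LHS]opprK; apply/eqP; rewrite oppr_eq0; apply/eqP; rewrite -hc /cross -/u1 -/u2 h1; ring.
    move/eqP; rewrite mulf_eq0 (negPf h2) /= subr_eq0 => /eqP h; rewrite h1 mulr0 addr0 subrKC -h.
    by case: (r).
  exists ((r.1 - p.1) / u1); rewrite /lpt divfK // subrKC.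
  have -> : (r.1 - p.1) / u1 * u2 = r.2 - p.2.
    apply: (mulIf h1); rewrite mulrAC divfK //; apply/eqP; rewrite eq_sym -subr_eq0 -hc /cross -/u1 -/u2; apply/eqP; ring.
  by rewrite subrKC; case: (r).
have k0 : k != 0 by apply: contra rp => /eqP k0; rewrite hk k0 -hp.
have k1 : k != 1 by apply: contra rq => /eqP k1; rewrite hk k1 -hq.
have sq : singular v (lpt p u1 u2 1) by rewrite -hq; apply/(Hs _).
have sr : singular v (lpt p u1 u2 k) by rewrite -hk; apply/(Hs _).
have Hl := line_sing k0 k1 ((Hs p).2 ps) sq sr.
have : (size [seq lpt p u1 u2 i%:R | i <- iota 0 5] <= size s)%N.
  apply: uniq_leq_size.
    rewrite map_inj_uniq ?iota_uniq // => i j /(lpt_inj hu); exact: natr_inj.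
  by move=> z /mapP [i _ ->]; apply/(Hs _).1; apply: Hl.
by rewrite size_map size_iota s4.
Qed.
End Work.

Section Work.
Variable R : closedFieldType.
Hypothesis charR0 : [pchar R] =i pred0.

Lemma norm_ex (p1 p2 p3 : R * R) : cross p1 p2 p3 != 0 ->
  exists a b c d e f : R, a * d - b * c != 0 /\ affT a b c d e f p1 = (0, 0) /\
     affT a b c d e f p2 = (1, 0) /\ affT a b c d e f p3 = (0, 1).
Proof.
case: p1 => x1 y1; case: p2 => x2 y2; case: p3 => x3 y3; rewrite /cross /= => hD.
set D := _ - _ in hD.
pose a := (y3 - y1) / D; pose b := - (x3 - x1) / D; pose c := - (y2 - y1) / D; pose d := (x2 - x1) / D.
exists a, b, c, d, (- (a * x1 + b * y1)), (- (c * x1 + d * y1)).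
have -> : a * d - b * c = D^-1 by rewrite /a /b /c /d /D; field; exact: hD.
rewrite invr_eq0 hD /affT /=; split => //; split; first by congr pair; ring.
by split; congr pair; rewrite /a /b /c /d /D; field; exact: hD.
Qed.


Section Norm.
Variables (u : qvf R) (al be : R).
Hypotheses (ha : al != 0) (hb : be != 0).
Hypotheses (s1 : singular u (0,0)) (s2 : singular u (1,0)) (s3 : singular u (0,1)) (s4 : singular u (al,be)).
Let hab : al * be != 0. Proof. by rewrite mulf_neq0. Qed.

Lemma nc0 : coef u 0 = 0.
Proof. by case: s1 => h _; rewrite -h /vP /=; ring. Qed.
Lemma nc6 : coef u 6 = 0.
Proof. by case: s1 => _ h; rewrite -h /vQ /=; ring. Qed.
Lemma nc1 : coef u 1 = - coef u 3.
Proof.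
apply/eqP; rewrite -subr_eq0 opprK; apply/eqP.
by case: s2 => h _; transitivity (vP u (1,0) - coef u 0); [rewrite /vP /=; ring | rewrite h nc0 subr0].
Qed.
Lemma nc7 : coef u 7 = - coef u 9.
Proof.
apply/eqP; rewrite -subr_eq0 opprK; apply/eqP.
by case: s2 => _ h; transitivity (vQ u (1,0) - coef u 6); [rewrite /vQ /=; ring | rewrite h nc6 subr0].
Qed.
Lemma nc2 : coef u 2 = - coef u 5.
Proof.
apply/eqP; rewrite -subr_eq0 opprK; apply/eqP.
by case: s3 => h _; transitivity (vP u (0,1) - coef u 0); [rewrite /vP /=; ring | rewrite h nc0 subr0].
Qed.
Lemma nc8 : coef u 8 = - coef u 11.
Proof.
apply/eqP; rewrite -subr_eq0 opprK; apply/eqP.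
by case: s3 => _ h; transitivity (vQ u (0,1) - coef u 6); [rewrite /vQ /=; ring | rewrite h nc6 subr0].
Qed.
Lemma nc4 : coef u 4 = (coef u 3 * al * (1 - al) + coef u 5 * be * (1 - be)) / (al * be).
Proof.
apply: (mulIf hab); rewrite divfK //.
case: s4 => h _; transitivity (coef u 4 * (al * be) - vP u (al, be)); first by rewrite h subr0.
by rewrite /vP /= nc0 nc1 nc2; ring.
Qed.
Lemma nc10 : coef u 10 = (coef u 9 * al * (1 - al) + coef u 11 * be * (1 - be)) / (al * be).
Proof.
apply: (mulIf hab); rewrite divfK //.
case: s4 => _ h; transitivity (coef u 10 * (al * be) - vQ u (al, be)); first by rewrite h subr0.
by rewrite /vQ /= nc6 nc7 nc8; ring.
Qed.

Lemma nJ0 : detD u (0,0) = coef u 3 * coef u 11 - coef u 5 * coef u 9.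
Proof. by rewrite /detD /vPx /vPy /vQx /vQy /= nc1 nc2 nc7 nc8; ring. Qed.
Lemma nJ1 : al * detD u (1,0) = - detD u (0,0) * (al + be - 1).
Proof. by rewrite nJ0 /detD /vPx /vPy /vQx /vQy /= nc1 nc2 nc7 nc8 nc4 nc10; field; rewrite ?ha ?hb. Qed.
Lemma nJ2 : be * detD u (0,1) = - detD u (0,0) * (al + be - 1).
Proof. by rewrite nJ0 /detD /vPx /vPy /vQx /vQy /= nc1 nc2 nc7 nc8 nc4 nc10; field; rewrite ?ha ?hb. Qed.
Lemma nJ3 : detD u (al,be) = detD u (0,0) * (al + be - 1).
Proof. by rewrite nJ0 /detD /vPx /vPy /vQx /vQy /= nc1 nc2 nc7 nc8 nc4 nc10; field; rewrite ?ha ?hb. Qed.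
End Norm.
End Work.

Section Work.
Variable R : closedFieldType.
Hypothesis charR0 : [pchar R] =i pred0.

Lemma sl_perm (v : qvf R) s s' : sing_list v s -> sing_list v s' -> perm_eq s s'.
Proof.
move=> [u1 h1] [u2 h2]; apply: uniq_perm => // x.
by apply/idP/idP => [/(h1 x)/(h2 x)|/(h2 x)/(h1 x)].
Qed.

Lemma sl_permr (v : qvf R) s s' : sing_list v s -> perm_eq s s' -> sing_list v s'.
Proof.
move=> [u1 h1] hp; split; first by rewrite -(perm_uniq hp).
by move=> p; rewrite -(perm_mem hp); exact: h1.
Qed.

Lemma perm_map_match (T1 T2 : eqType) (U : eqType) (f : T1 -> U) (g : T2 -> U) s t :
  perm_eq (map f s) (map g t) -> exists t', perm_eq t t' /\ map g t' = map f s.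
Proof.
elim: s t => [|x s IH] t /=.
  by rewrite perm_sym => /perm_nilP; case: t => // _; exists [::].
move=> hp; have : f x \in map g t by rewrite -(perm_mem hp) mem_head.
case/mapP => y yt gy.
have hp2 : perm_eq t (y :: rem y t) by exact: perm_to_rem.
have : perm_eq (map f s) (map g (rem y t)).
  rewrite -(perm_cons (f x)); apply: (perm_trans hp).
  by rewrite gy -map_cons; apply: perm_map.
case/IH => t' [h1 h2]; exists (y :: t'); split; last by rewrite /= h2 gy.
by apply: (perm_trans hp2); rewrite perm_cons.
Qed.

Lemma pf_sl a b c d e f (u w : qvf R) s : a * d - b * c != 0 ->
  is_pushforward a b c d e f u w -> sing_list u s -> sing_list w (map (affT a b c d e f) s).
Proof.
move=> hd hp [us hs]; split.
  by rewrite map_inj_uniq // => p q E; rewrite -(ST e f hd p) E ST.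
move=> q; rewrite -(TS e f hd q) (pf_sing hd _ hp) hs mem_map //.
by move=> p1 p2 E; rewrite -(ST e f hd p1) E ST.
Qed.

Lemma key_config (u : qvf R) p1 p2 p3 p4 : sing_list u [:: p1; p2; p3; p4] ->
  (forall p, p \in [:: p1; p2; p3; p4] -> detD u p != 0) ->
  exists a b c d e f : R, a * d - b * c != 0 /\ affT a b c d e f p1 = (0,0) /\
    affT a b c d e f p2 = (1,0) /\ affT a b c d e f p3 = (0,1) /\
    affT a b c d e f p4 = (- detD u p4 / detD u p2, - detD u p4 / detD u p3).
Proof.
move=> hsl hnd; have hsl' := hsl; case: hsl' => us hs.
move: (us); rewrite /= !inE !negb_or -!andbA => /and5P[n12 n13 n14 n23 /andP[n24 /andP[n34 _]]].
have s4 : size [:: p1; p2; p3; p4] = 4%N by [].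
have hc : cross p1 p2 p3 != 0.
  by apply: (gen_pos charR0 hsl s4); rewrite ?inE ?eqxx ?orbT // eq_sym.
have [a [b [c [d [e [f [hd [h1 [h2 h3]]]]]]]]] := norm_ex hc.
exists a, b, c, d, e, f; do 4! (split => //).
pose w := pushw a b c d e f u.
have hpf := pf_exists e f hd u.
have sl := pf_sl hd hpf hsl; rewrite /= h1 h2 h3 in sl.
case E4 : (affT a b c d e f p4) sl => [al be] sl.
have [usl hsw] := sl.
move: (usl); rewrite /= !inE !negb_or -!andbA => /and5P[_ _ m14 _ /andP[m24 /andP[m34 _]]].
have sw4 : size [:: (0, 0); (1, 0); (0, 1); (al, be)] = 4%N by [].
have n01 : ((0 : R), (0 : R)) != (0, 1) by rewrite xpair_eqE eqxx /= eq_sym oner_eq0.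
have n10 : ((0 : R), (0 : R)) != (1, 0) by rewrite xpair_eqE eqxx andbT eq_sym oner_eq0.
have ha : al != 0.
  have := gen_pos charR0 sl sw4 (p := (0,0)) (q := (0,1)) (r := (al,be)).
  rewrite !inE !eqxx !orbT /cross /= n01 eq_sym m14 eq_sym m34 => /(_ isT isT isT isT isT isT).
  by apply: contra => /eqP ->; apply/eqP; ring.
have hb : be != 0.
  have := gen_pos charR0 sl sw4 (p := (0,0)) (q := (1,0)) (r := (al,be)).
  rewrite !inE !eqxx !orbT /cross /= n10 eq_sym m14 eq_sym m24 => /(_ isT isT isT isT isT isT).
  by apply: contra => /eqP ->; apply/eqP; ring.
have S1 : singular w (0,0) by apply/hsw; rewrite !inE eqxx.
have S2 : singular w (1,0) by apply/hsw; rewrite !inE eqxx !orbT.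
have S3 : singular w (0,1) by apply/hsw; rewrite !inE eqxx !orbT.
have S4 : singular w (al,be) by apply/hsw; rewrite !inE eqxx !orbT.
have [_ D1] := pf_trdet charR0 hd p1 hpf; rewrite h1 in D1.
have [_ D2] := pf_trdet charR0 hd p2 hpf; rewrite h2 in D2.
have [_ D3] := pf_trdet charR0 hd p3 hpf; rewrite h3 in D3.
have [_ D4] := pf_trdet charR0 hd p4 hpf; rewrite E4 in D4.
have J1 := nJ1 ha hb S1 S2 S3 S4; have J2 := nJ2 ha hb S1 S2 S3 S4; have J3 := nJ3 ha hb S1 S2 S3 S4.
rewrite -/w D1 D2 in J1; rewrite -/w D1 D3 in J2; rewrite -/w D1 D4 in J3.
have d2 : detD u p2 != 0 by apply: hnd; rewrite !inE eqxx !orbT.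
have d3 : detD u p3 != 0 by apply: hnd; rewrite !inE eqxx !orbT.
congr pair.
  by apply: (mulIf d2); rewrite divfK // J1 J3; ring.
by apply: (mulIf d3); rewrite divfK // J2 J3; ring.
Qed.

Lemma twin_or_eq (v w : qvf R) s : sing_list v s -> sing_list w s ->
  (forall p, p \in s -> trD v p = trD w p /\ detD v p = detD w p) -> w = v \/ twin v w.
Proof.
move=> hv hw ht; case: (eqVneq w v) => [->|hne]; [by left | right].
split; first by move=> E; move: hne; rewrite E eqxx.
split; first by exists s.
split; first by exists s.
split; first by move=> p; rewrite (hv.2 p) (hw.2 p).
by move=> p /(hv.2 p) /ht.
Qed.

Lemma comp_affT (g1 g2 g3 g4 g5 g6 h1 h2 h3 h4 h5 h6 : R) p :
  affT (g1 * h1 + g2 * h3) (g1 * h2 + g2 * h4) (g3 * h1 + g4 * h3) (g3 * h2 + g4 * h4)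
       (g1 * h5 + g2 * h6 + g5) (g3 * h5 + g4 * h6 + g6) p =
  affT g1 g2 g3 g4 g5 g6 (affT h1 h2 h3 h4 h5 h6 p).
Proof. by case: p => x y; rewrite /affT /=; congr pair; ring. Qed.

Lemma si_det (a b c d : R) : a * d - b * c != 0 -> si1 a b c d * si4 a b c d - si2 a b c d * si3 a b c d != 0.
Proof.
move=> hd; have -> : si1 a b c d * si4 a b c d - si2 a b c d * si3 a b c d = (a * d - b * c)^-1.
  by rewrite /si1 /si2 /si3 /si4; field.
by rewrite invr_eq0.
Qed.

Lemma part1 (v vt : qvf R) :
  four_nondeg_sing v -> four_nondeg_sing vt -> same_spectra v vt ->
  exists (a b c d e f : R) (w : qvf R),
    a * d - b * c != 0 /\ is_pushforward a b c d e f vt w /\ (w = v \/ twin v w).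
Proof.
move=> [s0 [sl0 [sz0 nd0]]] [t0 [tl0 [tz0 ndt]]] [s [t [sl [tl hp]]]].
have ps := sl_perm sl0 sl; have pt := sl_perm tl0 tl.
have [t' [ptt' ht']] := perm_map_match hp.
have tl' := sl_permr tl ptt'.
have szs : size s = 4%N by rewrite -(perm_size ps).
have szt : size t' = 4%N by rewrite -(perm_size ptt') -(perm_size pt).
have nds : forall p, p \in s -> detD v p != 0 by move=> p; rewrite -(perm_mem ps); exact: nd0.
have ndt' : forall p, p \in t' -> detD vt p != 0.
  by move=> p; rewrite -(perm_mem ptt') -(perm_mem pt); exact: ndt.
move: s sl szs nds hp ps ht' => [|p1 [|p2 [|p3 [|p4 [|]]]]] // sl _ nds _ _ ht'.
move: t' ptt' tl' szt ndt' ht' => [|q1 [|q2 [|q3 [|q4 [|]]]]] // _ tl' _ ndt' [].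
move=> E1 E2 E3 E4; move: E1 E2 E3 E4; rewrite /spectrum.
move=> [T1 D1] [T2 D2] [T3 D3] [T4 D4].
have [a1 [b1 [c1 [d1 [e1 [f1 [hd1 [g1 [g2 [g3 g4]]]]]]]]]] := key_config sl nds.
have [a2 [b2 [c2 [d2 [e2 [f2 [hd2 [k1 [k2 [k3 k4]]]]]]]]]] := key_config tl' ndt'.
rewrite D2 D3 D4 -g4 in k4.
pose G1 := si1 a1 b1 c1 d1; pose G2 := si2 a1 b1 c1 d1; pose G3 := si3 a1 b1 c1 d1;
pose G4 := si4 a1 b1 c1 d1; pose G5 := si5 a1 b1 c1 d1 e1 f1; pose G6 := si6 a1 b1 c1 d1 e1 f1.
pose A := G1 * a2 + G2 * c2; pose B := G1 * b2 + G2 * d2; pose C := G3 * a2 + G4 * c2;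
pose D := G3 * b2 + G4 * d2; pose E := G1 * e2 + G2 * f2 + G5; pose F := G3 * e2 + G4 * f2 + G6.
have hT : forall p, affT A B C D E F p = affT G1 G2 G3 G4 G5 G6 (affT a2 b2 c2 d2 e2 f2 p).
  by move=> p; rewrite comp_affT.
have hd : A * D - B * C != 0.
  have -> : A * D - B * C = (G1 * G4 - G2 * G3) * (a2 * d2 - b2 * c2) by rewrite /A /B /C /D; ring.
  by rewrite mulf_neq0 // si_det.
have hq : forall i, (i < 4)%N -> affT A B C D E F (nth 0 [:: q1; q2; q3; q4] i) = nth 0 [:: p1; p2; p3; p4] i.
  move=> i hi; rewrite hT; case: i hi => [|[|[|[|]]]] // _ /=.
  - by rewrite k1 -g1 ST.
  - by rewrite k2 -g2 ST.
  - by rewrite k3 -g3 ST.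
  - by rewrite k4 ST.
exists A, B, C, D, E, F, (pushw A B C D E F vt).
have hpf := pf_exists E F hd vt; split => //; split => //.
have wl := pf_sl hd hpf tl'.
have ems : map (affT A B C D E F) [:: q1; q2; q3; q4] = [:: p1; p2; p3; p4].
  by rewrite /= (hq 0%N) // (hq 1%N) // (hq 2%N) // (hq 3%N).
rewrite ems in wl.
apply: (twin_or_eq sl wl) => p.
have trd := fun q => pf_trdet charR0 hd q hpf.
rewrite !inE => /or4P [] /eqP ->.
- by have := trd q1; rewrite (hq 0%N) // => -[-> ->].
- by have := trd q2; rewrite (hq 1%N) // => -[-> ->].
- by have := trd q3; rewrite (hq 2%N) // => -[-> ->].
- by have := trd q4; rewrite (hq 3%N) // => -[-> ->].
Qed.
End Work.

Section Work.
Variable R : closedFieldType.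

Definition pf (g : qvf R -> R) := exists F : mpoly12 R, forall v, meval F v = g v.

Lemma pf_ext g h : (forall v, g v = h v) -> pf g -> pf h.
Proof. by move=> E [F HF]; exists F => v; rewrite HF E. Qed.

Lemma pf_const c : pf (fun _ => c).
Proof.
exists [:: (c, [ffun=> 0%N])] => v; rewrite /meval big_seq1 /=.
by rewrite big1 ?mulr1 // => i _; rewrite ffunE expr0.
Qed.

Lemma pf_var k : (k < 12)%N -> pf (fun v => coef v k).
Proof.
move=> hk; exists [:: (1, [ffun i : 'I_12 => (i == inord k : nat)])] => v.
rewrite /meval big_seq1 /= mul1r (bigD1 (inord k)) //= ffunE eqxx expr1.
by rewrite big1 ?mulr1 // => i /negPf hi; rewrite ffunE hi expr0.
Qed.

Lemma pf_add g h : pf g -> pf h -> pf (fun v => g v + h v).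
Proof. by move=> [F HF] [G HG]; exists (F ++ G) => v; rewrite /meval big_cat /= -HF -HG. Qed.

Lemma pf_mul g h : pf g -> pf h -> pf (fun v => g v * h v).
Proof.
move=> [F HF] [G HG].
exists [seq (m1.1 * m2.1, [ffun i => (m1.2 i + m2.2 i)%N]) | m1 : R * {ffun 'I_12 -> nat} <- F, m2 : R * {ffun 'I_12 -> nat} <- G] => v.
rewrite -HF -HG /meval big_allpairs_dep mulr_suml; apply: eq_bigr => m1 _.
rewrite mulr_sumr; apply: eq_bigr => m2 _ /=.
rewrite (eq_bigr (fun i => v ord0 i ^+ m1.2 i * v ord0 i ^+ m2.2 i)); last first.
  by move=> i _; rewrite ffunE exprD.
rewrite big_split /=; ring.
Qed.

Lemma pf_opp g : pf g -> pf (fun v => - g v).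
Proof.
move=> h; apply: (pf_ext _ (pf_mul (pf_const (-1)) h)) => v; ring.
Qed.

Lemma pf_sub g h : pf g -> pf h -> pf (fun v => g v - h v).
Proof. by move=> hg hh; apply: pf_add => //; apply: pf_opp. Qed.

Lemma pf_sum (I : Type) (r : seq I) (P : pred I) (F : I -> qvf R -> R) :
  (forall i, pf (F i)) -> pf (fun v => \sum_(i <- r | P i) F i v).
Proof.
move=> H; elim: r => [|i r IH].
  by apply: (pf_ext _ (pf_const 0)) => v; rewrite big_nil.
case: (boolP (P i)) => hP.
  by apply: (pf_ext _ (pf_add (H i) IH)) => v; rewrite big_cons hP.
by apply: (pf_ext _ IH) => v; rewrite big_cons (negPf hP).
Qed.

Lemma pf_prod (I : Type) (r : seq I) (P : pred I) (F : I -> qvf R -> R) :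
  (forall i, pf (F i)) -> pf (fun v => \prod_(i <- r | P i) F i v).
Proof.
move=> H; elim: r => [|i r IH].
  by apply: (pf_ext _ (pf_const 1)) => v; rewrite big_nil.
case: (boolP (P i)) => hP.
  by apply: (pf_ext _ (pf_mul (H i) IH)) => v; rewrite big_cons hP.
by apply: (pf_ext _ IH) => v; rewrite big_cons (negPf hP).
Qed.

Lemma pf_mulrn g n : pf g -> pf (fun v => g v *+ n).
Proof. by move=> h; apply: (pf_ext _ (pf_mul h (pf_const n%:R))) => v; rewrite mulr_natr. Qed.

Lemma pf_det n (A : qvf R -> 'M[R]_n) : (forall i j, pf (fun v => A v i j)) ->
  pf (fun v => \det (A v)).
Proof.
move=> H; rewrite /determinant; apply: pf_sum => s.
apply: pf_mul; first exact: pf_const.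
by apply: pf_prod => i; apply: H.
Qed.

Definition pcf (P : qvf R -> {poly R}) := forall k, pf (fun v => (P v)`_k).

Lemma pcf_C g : pf g -> pcf (fun v => (g v)%:P).
Proof.
move=> h k; case: k => [|k].
  by apply: (pf_ext _ h) => v; rewrite coefC.
by apply: (pf_ext _ (pf_const 0)) => v; rewrite coefC.
Qed.

Lemma pcf_X : pcf (fun _ => 'X).
Proof. by move=> k; apply: pf_const. Qed.

Lemma pcf_add P Q : pcf P -> pcf Q -> pcf (fun v => P v + Q v).
Proof. by move=> hP hQ k; apply: (pf_ext _ (pf_add (hP k) (hQ k))) => v; rewrite coefD. Qed.

Lemma pcf_sub P Q : pcf P -> pcf Q -> pcf (fun v => P v - Q v).
Proof. by move=> hP hQ k; apply: (pf_ext _ (pf_sub (hP k) (hQ k))) => v; rewrite coefB. Qed.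

Lemma pcf_mul P Q : pcf P -> pcf Q -> pcf (fun v => P v * Q v).
Proof.
move=> hP hQ k.
apply: (@pf_ext (fun v => \sum_(j <- index_enum 'I_k.+1 | true) (P v)`_j * (Q v)`_(k - j)) (fun v => (P v * Q v)`_k)).
  by move=> v; rewrite coefM.
by apply: pf_sum => j; apply: pf_mul.
Qed.

Lemma pcf_deriv P : pcf P -> pcf (fun v => (P v)^`()).
Proof. by move=> hP k; apply: (pf_ext _ (pf_mulrn k.+1 (hP k.+1))) => v; rewrite coef_deriv. Qed.

Lemma pcf_XnM P n : pcf P -> pcf (fun v => 'X^n * P v).
Proof.
move=> hP k; case: (ltnP k n) => h.
  by apply: (pf_ext _ (pf_const 0)) => v; rewrite coefXnM h.
by apply: (pf_ext _ (hP (k - n)%N)) => v; rewrite coefXnM ltnNge h.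
Qed.
End Work.

Section Work.
Variable R : closedFieldType.

Definition Syl N n (p q : {poly R}) : 'M[R]_N :=
  \matrix_(i < N, j < N) if (i < n)%N then ('X^i * p)`_j else ('X^(i - n) * q)`_j.

Lemma size_XnM i (p : {poly R}) : (size ('X^i * p)%R <= i + size p)%N.
Proof.
apply: leq_trans (size_polyMleq _ _) _; rewrite size_polyXn addSn /=; exact: leqnn.
Qed.

Lemma syl_noroot N n (p q : {poly R}) z : (0 < N)%N -> (size p + n <= N.+1)%N -> (size q <= n.+1)%N ->
  root p z -> root q z -> \det (Syl N n p q) = 0.
Proof.
move=> N0 hp hq /eqP rp /eqP rq.
pose x : 'cV[R]_N := \col_(j < N) z ^+ j.
have hx : Syl N n p q *m x = 0.
  apply/colP => i; rewrite !mxE.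
  have [hi|hi] := boolP (i < n)%N.
    under eq_bigr do rewrite !mxE hi.
    rewrite -horner_coef_wide ?hornerM ?rp ?mulr0 //.
    apply: leq_trans (size_XnM _ _) _; rewrite addnC -ltnS.
    by apply: leq_trans hp; rewrite ltn_add2l.
  under eq_bigr do rewrite !mxE (negPf hi).
  rewrite -horner_coef_wide ?hornerM ?rq ?mulr0 //.
  apply: leq_trans (size_XnM _ _) _.
  have := ltn_ord i; move: hi; rewrite -leqNgt => hi hiN.
  by apply: leq_trans (leq_add (leqnn _) hq) _; rewrite addnS subnK.
apply/eqP; apply: contraT => hd.
have hu : Syl N n p q \in unitmx by rewrite unitmxE unitfE.
have : x = 0 by rewrite -(mulKmx hu x) hx mulmx0.
move/matrixP => /(_ (Ordinal N0) 0); rewrite !mxE expr0 => /eqP.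
by rewrite oner_eq0.
Qed.

Lemma syl_resultant (p q : {poly R}) m n : size p = m.+1 -> size q = n.+1 ->
  resultant p q = \det (Syl (n + m) n p q).
Proof.
move=> hp hq; rewrite /resultant.
have -> : Sylvester_mx p q = Syl ((size q).-1 + (size p).-1) (size q).-1 p q.
  apply/matrixP => i j; rewrite Sylvester_mxE mxE; case: splitP => k hk.
    by rewrite hk coefXnM; case: ltnP => h; rewrite ?mulr0n ?mulr1n.
  by rewrite hk addKn coefXnM; case: ltnP => h; rewrite ?mulr0n ?mulr1n.
by rewrite hp hq.
Qed.

Lemma pf_Syl N n (P Q : qvf R -> {poly R}) i j : pcf P -> pcf Q ->
  pf (fun v => Syl N n (P v) (Q v) i j).
Proof.
move=> hP hQ; have [hi|hi] := boolP (i < n)%N.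
  by apply: (pf_ext _ (pcf_XnM i hP j)) => v; rewrite mxE hi.
by apply: (pf_ext _ (pcf_XnM (i - n) hQ j)) => v; rewrite mxE (negPf hi).
Qed.
End Work.

Section Work.
Variable R : closedFieldType.
Implicit Types v : qvf R.

Definition pa0 v : {poly R} := (coef v 0)%:P + (coef v 1)%:P * 'X + (coef v 3)%:P * 'X^2.
Definition pa1 v : {poly R} := (coef v 2)%:P + (coef v 4)%:P * 'X.
Definition pb0 v : {poly R} := (coef v 6)%:P + (coef v 7)%:P * 'X + (coef v 9)%:P * 'X^2.
Definition pb1 v : {poly R} := (coef v 8)%:P + (coef v 10)%:P * 'X.
Definition pmu v := (coef v 5)%:P * pb0 v - (coef v 11)%:P * pa0 v.
Definition plam v := (coef v 5)%:P * pb1 v - (coef v 11)%:P * pa1 v.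
Definition pnu v := pa1 v * pb0 v - pb1 v * pa0 v.
Definition pr v := pmu v * pmu v - plam v * pnu v.
Definition pdr v := (pr v)^`().
Definition pj v :=
  (plam v * ((coef v 1)%:P + (2%:R * coef v 3)%:P * 'X) - (coef v 4)%:P * pmu v) *
  (plam v * ((coef v 8)%:P + (coef v 10)%:P * 'X) - (2%:R * coef v 11)%:P * pmu v) -
  (plam v * ((coef v 2)%:P + (coef v 4)%:P * 'X) - (2%:R * coef v 5)%:P * pmu v) *
  (plam v * ((coef v 7)%:P + (2%:R * coef v 9)%:P * 'X) - (coef v 10)%:P * pmu v).

Lemma ev_lam v x : (plam v).[x] = coef v 5 * (coef v 8 + coef v 10 * x) - coef v 11 * (coef v 2 + coef v 4 * x).
Proof. by rewrite /plam /pb1 /pa1 !hornerE. Qed.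
Lemma ev_mu v x : (pmu v).[x] = coef v 5 * (coef v 6 + coef v 7 * x + coef v 9 * x ^+ 2)
   - coef v 11 * (coef v 0 + coef v 1 * x + coef v 3 * x ^+ 2).
Proof. by rewrite /pmu /pb0 /pa0 !hornerE. Qed.
Lemma ev_nu v x : (pnu v).[x] = (coef v 2 + coef v 4 * x) * (coef v 6 + coef v 7 * x + coef v 9 * x ^+ 2)
   - (coef v 8 + coef v 10 * x) * (coef v 0 + coef v 1 * x + coef v 3 * x ^+ 2).
Proof. by rewrite /pnu /pb0 /pa0 /pb1 /pa1 !hornerE. Qed.
Lemma ev_r v x : (pr v).[x] = (pmu v).[x] * (pmu v).[x] - (plam v).[x] * (pnu v).[x].
Proof. by rewrite /pr !hornerE. Qed.
Lemma ev_j v x : (pj v).[x] =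
  ((plam v).[x] * (coef v 1 + 2%:R * coef v 3 * x) - coef v 4 * (pmu v).[x]) *
  ((plam v).[x] * (coef v 8 + coef v 10 * x) - 2%:R * coef v 11 * (pmu v).[x]) -
  ((plam v).[x] * (coef v 2 + coef v 4 * x) - 2%:R * coef v 5 * (pmu v).[x]) *
  ((plam v).[x] * (coef v 7 + 2%:R * coef v 9 * x) - coef v 10 * (pmu v).[x]).
Proof. by rewrite /pj !hornerE. Qed.

Lemma E1 v x y : coef v 11 * vP v (x, y) - coef v 5 * vQ v (x, y) = - ((plam v).[x] * y + (pmu v).[x]).
Proof. by rewrite ev_lam ev_mu /vP /vQ; ring. Qed.

Lemma E2 v x y : (pr v).[x] = (coef v 11 * vP v (x, y) - coef v 5 * vQ v (x, y)) * ((plam v).[x] * y - (pmu v).[x])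
  + (plam v).[x] * ((coef v 8 + coef v 10 * x) * vP v (x, y) - (coef v 2 + coef v 4 * x) * vQ v (x, y)).
Proof. by rewrite ev_r ev_lam ev_mu ev_nu /vP /vQ; ring. Qed.

Lemma E3 v x : (plam v).[x] != 0 ->
  vP v (x, - (pmu v).[x] / (plam v).[x]) * (plam v).[x] ^+ 2 = coef v 5 * (pr v).[x] /\
  vQ v (x, - (pmu v).[x] / (plam v).[x]) * (plam v).[x] ^+ 2 = coef v 11 * (pr v).[x].
Proof.
move=> hl; rewrite ev_r /vP /vQ; move: hl; rewrite ev_lam ev_mu ev_nu => hl.
by split; field.
Qed.

Lemma E4 v x : (plam v).[x] != 0 ->
  detD v (x, - (pmu v).[x] / (plam v).[x]) * (plam v).[x] ^+ 2 = (pj v).[x].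
Proof.
move=> hl; rewrite ev_j /detD /vPx /vPy /vQx /vQy /=; move: hl; rewrite ev_lam ev_mu => hl.
by field.
Qed.
End Work.

Section Work.
Variable R : closedFieldType.
Implicit Types v : qvf R.

Lemma szC (c : R) n : (0 < n)%N -> (size c%:P <= n)%N.
Proof. by move=> h; apply: leq_trans (size_polyC_leq1 c) h. Qed.
Lemma szD (p q : {poly R}) n : (size p <= n)%N -> (size q <= n)%N -> (size (p + q)%R <= n)%N.
Proof. by move=> h1 h2; apply: leq_trans (size_polyD _ _) _; rewrite geq_max h1 h2. Qed.
Lemma szB (p q : {poly R}) n : (size p <= n)%N -> (size q <= n)%N -> (size (p - q)%R <= n)%N.
Proof. by move=> h1 h2; apply: szD => //; rewrite size_polyN. Qed.
Lemma szM (p q : {poly R}) m n : (size p <= m.+1)%N -> (size q <= n.+1)%N -> (size (p * q)%R <= (m + n).+1)%N.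
Proof.
move=> h1 h2; apply: leq_trans (size_polyMleq _ _) _.
lia.
Qed.
Lemma szX : (size ('X : {poly R}) <= 2)%N. Proof. by rewrite size_polyX. Qed.
Lemma szXn n : (size ('X^n : {poly R}) <= n.+1)%N. Proof. by rewrite size_polyXn. Qed.

Lemma szMle (p q : {poly R}) m n k : (size p <= m.+1)%N -> (size q <= n.+1)%N -> (m + n < k)%N ->
  (size (p * q)%R <= k)%N.
Proof. by move=> h1 h2 h3; apply: leq_trans (szM h1 h2) h3. Qed.

Lemma sz_lin (a b : R) n : (1 < n)%N -> (size (a%:P + b%:P * 'X)%R <= n)%N.
Proof. by move=> h; apply: szD; [apply: szC; lia | apply: (szMle (m:=0) (n:=1)) => //; [exact: szC | exact: szX]]. Qed.
Lemma sz_quad (a b c : R) n : (2 < n)%N -> (size (a%:P + b%:P * 'X + c%:P * 'X^2)%R <= n)%N.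
Proof.
move=> h; apply: szD; first by apply: sz_lin; lia.
by apply: (szMle (m:=0) (n:=2)) => //; [exact: szC | exact: szXn].
Qed.

Lemma sz_mu v : (size (pmu v) <= 3)%N.
Proof. by apply: szB; apply: (szMle (m:=0) (n:=2)) => //; first [apply: szC | apply: sz_quad]. Qed.
Lemma sz_lam v : (size (plam v) <= 2)%N.
Proof. by apply: szB; apply: (szMle (m:=0) (n:=1)) => //; first [apply: szC | apply: sz_lin]. Qed.
Lemma sz_nu v : (size (pnu v) <= 4)%N.
Proof. by apply: szB; [apply: (szMle (m:=1) (n:=2)) | apply: (szMle (m:=1) (n:=2))] => //; first [apply: sz_lin | apply: sz_quad]. Qed.
Lemma sz_r v : (size (pr v) <= 5)%N.
Proof.
apply: szB; first by apply: (szMle (m:=2) (n:=2)) => //; apply: sz_mu.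
by apply: (szMle (m:=1) (n:=3)) => //; [apply: sz_lam | apply: sz_nu].
Qed.
Lemma sz_dr v : (size (pdr v) <= 4)%N.
Proof.
rewrite /pdr; have [->|h] := eqVneq (pr v) 0; first by rewrite deriv0 size_poly0.
by have := lt_size_deriv h; have := sz_r v; lia.
Qed.
Lemma sz_j v : (size (pj v) <= 5)%N.
Proof.
have f1 : forall (a b c : R), (size (plam v * (a%:P + b%:P * 'X) - c%:P * pmu v)%R <= 3)%N.
  move=> a b c; apply: szB; first by apply: (szMle (m:=1) (n:=1)) => //; [apply: sz_lam | apply: sz_lin].
  by apply: (szMle (m:=0) (n:=2)) => //; [apply: szC | apply: sz_mu].
by apply: szB; apply: (szMle (m:=2) (n:=2)) => //; apply: f1.
Qed.

Lemma pcf_opp (P : qvf R -> {poly R}) : pcf P -> pcf (fun v => - P v).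
Proof. by move=> h k; apply: (pf_ext _ (pf_opp (h k))) => v; rewrite coefN. Qed.
Lemma pcf_cst (p : {poly R}) : pcf (fun _ => p).
Proof. by move=> k; apply: pf_const. Qed.

Ltac pcft := repeat first [ apply: pcf_add | apply: pcf_sub | apply: pcf_opp | apply: pcf_mul | apply: pcf_deriv
  | apply: pcf_cst | apply: pcf_C | (apply: pf_var; done) | apply: pf_mul | apply: pf_const ].

Lemma pcf_r : pcf (@pr R).
Proof. by rewrite /pr /pmu /plam /pnu /pa0 /pa1 /pb0 /pb1; pcft. Qed.
Lemma pcf_dr : pcf (@pdr R).
Proof. by rewrite /pdr /pr /pmu /plam /pnu /pa0 /pa1 /pb0 /pb1; pcft. Qed.
Lemma pcf_lam : pcf (@plam R).
Proof. by rewrite /plam /pa1 /pb1; pcft. Qed.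
Lemma pcf_j : pcf (@pj R).
Proof. by rewrite /pj /pmu /plam /pa0 /pa1 /pb0 /pb1; pcft. Qed.

Definition det3 (a b c d e f g h i : R) := a * (e * i - f * h) - b * (d * i - f * g) + c * (d * h - e * g).
Definition N1 v := det3 (coef v 7) (coef v 2) (coef v 8) (2%:R * coef v 9) (coef v 4) (coef v 10)
  (coef v 10) (2%:R * coef v 5) (2%:R * coef v 11).
Definition N2 v := - det3 (coef v 1) (coef v 2) (coef v 8) (2%:R * coef v 3) (coef v 4) (coef v 10)
  (coef v 4) (2%:R * coef v 5) (2%:R * coef v 11).
Definition N3 v := det3 (coef v 1) (coef v 7) (coef v 8) (2%:R * coef v 3) (2%:R * coef v 9) (coef v 10)
  (coef v 4) (coef v 10) (2%:R * coef v 11).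
Definition N4 v := - det3 (coef v 1) (coef v 7) (coef v 2) (2%:R * coef v 3) (2%:R * coef v 9) (coef v 4)
  (coef v 4) (coef v 10) (2%:R * coef v 5).

Definition dot0 v (X1 X2 X3 X4 : R) := coef v 1 * X1 + coef v 7 * X2 + coef v 2 * X3 + coef v 8 * X4.
Definition dot1 v (X1 X2 X3 X4 : R) := 2%:R * coef v 3 * X1 + 2%:R * coef v 9 * X2 + coef v 4 * X3 + coef v 10 * X4.
Definition dot2 v (X1 X2 X3 X4 : R) := coef v 4 * X1 + coef v 10 * X2 + 2%:R * coef v 5 * X3 + 2%:R * coef v 11 * X4.

Lemma dotN v : [/\ dot0 v (N1 v) (N2 v) (N3 v) (N4 v) = 0, dot1 v (N1 v) (N2 v) (N3 v) (N4 v) = 0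
   & dot2 v (N1 v) (N2 v) (N3 v) (N4 v) = 0].
Proof. by rewrite /dot0 /dot1 /dot2 /N1 /N2 /N3 /N4 /det3; split; ring. Qed.

Lemma Lform v X1 X2 X3 X4 p :
  X1 * vPx v p + X2 * vQx v p + X3 * vPy v p + X4 * vQy v p =
  dot0 v X1 X2 X3 X4 + dot1 v X1 X2 X3 X4 * p.1 + dot2 v X1 X2 X3 X4 * p.2.
Proof. by rewrite /dot0 /dot1 /dot2 /vPx /vQx /vPy /vQy; ring. Qed.

Definition fU v := (pr v)`_4 * \det (Syl 7 3 (pr v) (pdr v)) * \det (Syl 5 1 (pr v) (plam v))
  * \det (Syl 8 4 (pr v) (pj v)) * N4 v * (N1 v + N4 v) * (N1 v * N4 v - N2 v * N3 v).

Lemma pf_fU : pf fU.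
Proof.
rewrite /fU; repeat apply: pf_mul.
- exact: pcf_r.
- by apply: pf_det => i j; apply: pf_Syl; [exact: pcf_r | exact: pcf_dr].
- by apply: pf_det => i j; apply: pf_Syl; [exact: pcf_r | exact: pcf_lam].
- by apply: pf_det => i j; apply: pf_Syl; [exact: pcf_r | exact: pcf_j].
- by rewrite /N4 /det3; repeat first [apply: pf_add | apply: pf_sub | apply: pf_opp | apply: pf_mul | (apply: pf_var; done) | apply: pf_const].
- by rewrite /N1 /N4 /det3; repeat first [apply: pf_add | apply: pf_sub | apply: pf_opp | apply: pf_mul | (apply: pf_var; done) | apply: pf_const].
- by rewrite /N1 /N2 /N3 /N4 /det3; repeat first [apply: pf_add | apply: pf_sub | apply: pf_opp | apply: pf_mul | (apply: pf_var; done) | apply: pf_const].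
Qed.
End Work.

Section Work.
Variable R : closedFieldType.
Hypothesis charR0 : [pchar R] =i pred0.
Implicit Types v : qvf R.

Lemma coprime_noroot (p q : {poly R}) : p != 0 -> (forall z, root p z -> root q z -> False) -> coprimep p q.
Proof.
move=> p0 H; rewrite coprimep_def; apply: contraT => hs.
have [z hz] := closed_rootP _ hs.
by rewrite root_gcd in hz; case/andP: hz => h1 h2; case: (H z h1 h2).
Qed.

Lemma fU_factors v : fU v != 0 ->
  [/\ (pr v)`_4 != 0, \det (Syl 7 3 (pr v) (pdr v)) != 0, \det (Syl 5 1 (pr v) (plam v)) != 0,
      \det (Syl 8 4 (pr v) (pj v)) != 0 &
      [/\ N4 v != 0, N1 v + N4 v != 0 & N1 v * N4 v - N2 v * N3 v != 0]].
Proof.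
rewrite /fU !mulf_eq0 !negb_or -!andbA.
by case/and5P => h1 h2 h3 h4 /and3P [h5 h6 h7].
Qed.

Lemma sing4 v : fU v != 0 -> exists rs : seq R,
  [/\ sing_list v [seq (z, - (pmu v).[z] / (plam v).[z]) | z <- rs], size rs = 4%N,
      forall z, z \in rs -> (plam v).[z] != 0 &
      forall p, p \in [seq (z, - (pmu v).[z] / (plam v).[z]) | z <- rs] -> detD v p != 0].
Proof.
case/fU_factors => r4 d1 d2 d3 _.
have szr : size (pr v) = 5%N.
  apply/eqP; rewrite eqn_leq sz_r /=; apply: contraT; rewrite -ltnNge ltnS => h.
  by move: r4; rewrite nth_default // eqxx.
have [rs hrs] := closed_field_poly_normal (pr v).
have lc0 : lead_coef (pr v) != 0 by rewrite lead_coef_eq0 -size_poly_eq0 szr.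
have szrs : size rs = 4%N.
  by move: szr; rewrite hrs size_scale // size_prod_XsubC => -[].
have hroot : forall z, root (pr v) z = (z \in rs) by move=> z; rewrite hrs rootZ // root_prod_XsubC.
have lamnz : forall z, z \in rs -> (plam v).[z] != 0.
  move=> z hz; apply/negP => /eqP hl; move: d2; rewrite (syl_noroot (z:=z)) ?eqxx //.
  - by rewrite szr.
  - exact: sz_lam.
  - by rewrite hroot.
  - by apply/eqP.
have jnz : forall z, z \in rs -> (pj v).[z] != 0.
  move=> z hz; apply/negP => /eqP hl; move: d3; rewrite (syl_noroot (z:=z)) ?eqxx //.
  - by rewrite szr.
  - exact: sz_j.
  - by rewrite hroot.
  - by apply/eqP.
have urs : uniq rs.
  rewrite -separable_prod_XsubC unlock; apply: coprime_noroot.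
    by rewrite monic_neq0 // monic_prod_XsubC.
  move=> z h1 h2; move: d1; rewrite (syl_noroot (z:=z)) ?eqxx //.
  - by rewrite szr.
  - exact: sz_dr.
  - by rewrite hrs rootZ.
  - by rewrite /pdr hrs derivZ rootZ.
exists rs; split => //.
- split.
    by rewrite map_inj_uniq // => z1 z2 [].
  case=> x y; split.
    case=> hP hQ.
    have hx : x \in rs.
      by rewrite -hroot; apply/eqP; rewrite (E2 v x y) hP hQ; ring.
    have e := E1 v x y; rewrite hP hQ in e.
    have hy : y = - (pmu v).[x] / (plam v).[x].
      have e' : (plam v).[x] * y + (pmu v).[x] = 0 by rewrite -[LHS]opprK -e; ring.
      apply: (mulIf (lamnz _ hx)); rewrite divfK ?lamnz // mulrC.
      by apply/eqP; rewrite -subr_eq0 opprK e'.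
    by rewrite hy; apply: map_f.
  case/mapP => z hz [-> ->].
  have [e1 e2] := E3 (lamnz _ hz).
  have hr : (pr v).[z] = 0 by apply/eqP; rewrite -hroot in hz.
  rewrite hr mulr0 in e1 e2.
  have l2 : (plam v).[z] ^+ 2 != 0 by rewrite expf_neq0 // lamnz.
  by split; [move: e1 | move: e2]; rewrite ?mulr0 => /eqP; rewrite mulf_eq0 (negPf l2) orbF => /eqP.
- move=> p /mapP [z hz ->].
  have e := E4 (lamnz _ hz).
  apply/negP => /eqP h; move: e; rewrite h mul0r => /esym /eqP; apply/negP; exact: jnz.
Qed.
End Work.

Section Work.
Variable R : closedFieldType.
Hypothesis charR0 : [pchar R] =i pred0.
Implicit Types v : qvf R.

Definition mlA (a11 a12 a21 a22 : R) v := cmp a11 a12 a21 a22 1 0 0 1 0 0 v.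

Lemma idS (p : R * R) : affT 1 0 0 1 0 0 p = p.
Proof. by case: p => x y; rewrite /affT /=; congr pair; ring. Qed.

Section MA.
Variables (a11 a12 a21 a22 : R) (v : qvf R).
Lemma mAP p : vP (mlA a11 a12 a21 a22 v) p = a11 * vP v p + a12 * vQ v p.
Proof. by rewrite /mlA cmpP idS. Qed.
Lemma mAQ p : vQ (mlA a11 a12 a21 a22 v) p = a21 * vP v p + a22 * vQ v p.
Proof. by rewrite /mlA cmpQ idS. Qed.
Lemma mAtr p : trD (mlA a11 a12 a21 a22 v) p = a11 * vPx v p + a12 * vQx v p + a21 * vPy v p + a22 * vQy v p.
Proof. by rewrite /trD /mlA cmpPx cmpQy idS; ring. Qed.
Lemma mAdet p : detD (mlA a11 a12 a21 a22 v) p = (a11 * a22 - a12 * a21) * detD v p.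
Proof. by rewrite /detD /mlA cmpPx cmpPy cmpQx cmpQy idS; ring. Qed.
Lemma mA_sing p : a11 * a22 - a12 * a21 != 0 -> (singular (mlA a11 a12 a21 a22 v) p <-> singular v p).
Proof.
move=> hd; rewrite /singular mAP mAQ; split => [[h1 h2]|[-> ->]]; last by rewrite !mulr0 !addr0.
have E1 : (a11 * a22 - a12 * a21) * vP v p = 0.
  transitivity (a22 * (a11 * vP v p + a12 * vQ v p) - a12 * (a21 * vP v p + a22 * vQ v p)); first by ring.
  by rewrite h1 h2; ring.
have E2 : (a11 * a22 - a12 * a21) * vQ v p = 0.
  transitivity (a11 * (a21 * vP v p + a22 * vQ v p) - a21 * (a11 * vP v p + a12 * vQ v p)); first by ring.
  by rewrite h1 h2; ring.
by split; [move/eqP: E1 | move/eqP: E2]; rewrite mulf_eq0 (negPf hd) => /eqP.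
Qed.
End MA.

Lemma mA_id v : mlA 1 0 0 1 v = v.
Proof. by apply: qvf_funP => // p; rewrite mAP mAQ; split; ring. Qed.

Definition ptx (i : nat) : R * R := (i%:R, 0).

Lemma all_sing_false v s : sing_list v s -> size s = 4%N -> (forall p, singular v p) -> False.
Proof.
move=> [us hs] s4 H.
have : (size [seq ptx i | i <- iota 0 5] <= size s)%N.
  apply: uniq_leq_size.
    by rewrite map_inj_uniq ?iota_uniq // => i j [] /(natr_inj charR0).
  by move=> z /mapP [i _ ->]; apply/(hs _).1; apply: H.
by rewrite size_map size_iota s4.
Qed.

Lemma aff3 (e0 e1 e2 : R) (p1 p2 p3 : R * R) : cross p1 p2 p3 != 0 ->
  e0 + e1 * p1.1 + e2 * p1.2 = 0 -> e0 + e1 * p2.1 + e2 * p2.2 = 0 -> e0 + e1 * p3.1 + e2 * p3.2 = 0 ->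
  [/\ e0 = 0, e1 = 0 & e2 = 0].
Proof.
move=> hc h1 h2 h3.
have E1 : e1 * cross p1 p2 p3 = 0.
  transitivity ((p3.2 - p1.2) * ((e0 + e1 * p2.1 + e2 * p2.2) - (e0 + e1 * p1.1 + e2 * p1.2))
     - (p2.2 - p1.2) * ((e0 + e1 * p3.1 + e2 * p3.2) - (e0 + e1 * p1.1 + e2 * p1.2))).
    by rewrite /cross; ring.
  by rewrite h1 h2 h3; ring.
have E2 : e2 * cross p1 p2 p3 = 0.
  transitivity ((p2.1 - p1.1) * ((e0 + e1 * p3.1 + e2 * p3.2) - (e0 + e1 * p1.1 + e2 * p1.2))
     - (p3.1 - p1.1) * ((e0 + e1 * p2.1 + e2 * p2.2) - (e0 + e1 * p1.1 + e2 * p1.2))).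
    by rewrite /cross; ring.
  by rewrite h1 h2 h3; ring.
move/eqP: E1; rewrite mulf_eq0 (negPf hc) orbF => /eqP z1.
move/eqP: E2; rewrite mulf_eq0 (negPf hc) orbF => /eqP z2.
by split => //; rewrite -h1 z1 z2; ring.
Qed.

Lemma cramer3 (a11 a12 a13 a21 a22 a23 a31 a32 a33 y1 y2 y3 : R) :
  det3 a11 a12 a13 a21 a22 a23 a31 a32 a33 != 0 ->
  a11 * y1 + a12 * y2 + a13 * y3 = 0 -> a21 * y1 + a22 * y2 + a23 * y3 = 0 -> a31 * y1 + a32 * y2 + a33 * y3 = 0 ->
  [/\ y1 = 0, y2 = 0 & y3 = 0].
Proof.
move=> hd h1 h2 h3.
have F1 : det3 a11 a12 a13 a21 a22 a23 a31 a32 a33 * y1 = 0.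
  transitivity ((a22 * a33 - a23 * a32) * (a11 * y1 + a12 * y2 + a13 * y3)
    - (a12 * a33 - a13 * a32) * (a21 * y1 + a22 * y2 + a23 * y3)
    + (a12 * a23 - a13 * a22) * (a31 * y1 + a32 * y2 + a33 * y3)); first by rewrite /det3; ring.
  by rewrite h1 h2 h3; ring.
have F2 : det3 a11 a12 a13 a21 a22 a23 a31 a32 a33 * y2 = 0.
  transitivity (- (a21 * a33 - a23 * a31) * (a11 * y1 + a12 * y2 + a13 * y3)
    + (a11 * a33 - a13 * a31) * (a21 * y1 + a22 * y2 + a23 * y3)
    - (a11 * a23 - a13 * a21) * (a31 * y1 + a32 * y2 + a33 * y3)); first by rewrite /det3; ring.
  by rewrite h1 h2 h3; ring.
have F3 : det3 a11 a12 a13 a21 a22 a23 a31 a32 a33 * y3 = 0.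
  transitivity ((a21 * a32 - a22 * a31) * (a11 * y1 + a12 * y2 + a13 * y3)
    - (a11 * a32 - a12 * a31) * (a21 * y1 + a22 * y2 + a23 * y3)
    + (a11 * a22 - a12 * a21) * (a31 * y1 + a32 * y2 + a33 * y3)); first by rewrite /det3; ring.
  by rewrite h1 h2 h3; ring.
by split; [move/eqP: F1 | move/eqP: F2 | move/eqP: F3]; rewrite mulf_eq0 (negPf hd) => /eqP.
Qed.

Lemma kerN v X1 X2 X3 X4 : N4 v != 0 ->
  dot0 v X1 X2 X3 X4 = 0 -> dot1 v X1 X2 X3 X4 = 0 -> dot2 v X1 X2 X3 X4 = 0 ->
  [/\ X1 = X4 / N4 v * N1 v, X2 = X4 / N4 v * N2 v & X3 = X4 / N4 v * N3 v].
Proof.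
move=> hn h0 h1 h2; set s := X4 / N4 v.
have hs : X4 = s * N4 v by rewrite /s divfK.
have [d0 d1 d2] := dotN v.
have hd : det3 (coef v 1) (coef v 7) (coef v 2) (2%:R * coef v 3) (2%:R * coef v 9) (coef v 4)
   (coef v 4) (coef v 10) (2%:R * coef v 5) != 0.
  by rewrite -oppr_eq0 -/(N4 v).
have e0 : coef v 1 * (X1 - s * N1 v) + coef v 7 * (X2 - s * N2 v) + coef v 2 * (X3 - s * N3 v) = 0.
  transitivity (dot0 v X1 X2 X3 X4 - s * dot0 v (N1 v) (N2 v) (N3 v) (N4 v)); first by rewrite /dot0 hs; ring.
  by rewrite h0 d0; ring.
have e1 : 2%:R * coef v 3 * (X1 - s * N1 v) + 2%:R * coef v 9 * (X2 - s * N2 v) + coef v 4 * (X3 - s * N3 v) = 0.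
  transitivity (dot1 v X1 X2 X3 X4 - s * dot1 v (N1 v) (N2 v) (N3 v) (N4 v)); first by rewrite /dot1 hs; ring.
  by rewrite h1 d1; ring.
have e2 : coef v 4 * (X1 - s * N1 v) + coef v 10 * (X2 - s * N2 v) + 2%:R * coef v 5 * (X3 - s * N3 v) = 0.
  transitivity (dot2 v X1 X2 X3 X4 - s * dot2 v (N1 v) (N2 v) (N3 v) (N4 v)); first by rewrite /dot2 hs; ring.
  by rewrite h2 d2; ring.
have [y1 y2 y3] := cramer3 hd e0 e1 e2.
by split; apply/eqP; rewrite -subr_eq0; apply/eqP.
Qed.
End Work.

Section Work.
Variable R : closedFieldType.
Hypothesis charR0 : [pchar R] =i pred0.
Implicit Types v : qvf R.

Lemma npencil (u u' : qvf R) al be : al != 0 -> be != 0 ->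
  singular u (0,0) -> singular u (1,0) -> singular u (0,1) -> singular u (al,be) ->
  singular u' (0,0) -> singular u' (1,0) -> singular u' (0,1) -> singular u' (al,be) ->
  detD u (0,0) != 0 -> exists K11 K12 K21 K22, u' = mlA K11 K12 K21 K22 u.
Proof.
move=> ha hb s1 s2 s3 s4 t1 t2 t3 t4; rewrite (nJ0 s1 s2 s3) => hD.
set D := _ - _ in hD.
exists ((coef u' 3 * coef u 11 - coef u' 5 * coef u 9) / D), ((coef u' 5 * coef u 3 - coef u' 3 * coef u 5) / D),
  ((coef u' 9 * coef u 11 - coef u' 11 * coef u 9) / D), ((coef u' 11 * coef u 3 - coef u' 9 * coef u 5) / D).
apply: (qvf_funP charR0) => -[x y]; rewrite mAP mAQ /vP /vQ.
rewrite (nc0 t1) (nc1 t1 t2) (nc2 t1 t3) (nc4 ha hb t1 t2 t3 t4) (nc6 t1) (nc7 t1 t2) (nc8 t1 t3) (nc10 ha hb t1 t2 t3 t4).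
rewrite (nc0 s1) (nc1 s1 s2) (nc2 s1 s3) (nc4 ha hb s1 s2 s3 s4) (nc6 s1) (nc7 s1 s2) (nc8 s1 s3) (nc10 ha hb s1 s2 s3 s4).
by rewrite /D; split; field; rewrite ?ha ?hb ?hD.
Qed.

Lemma pullback a b c d e f (v w u u' : qvf R) K11 K12 K21 K22 : a * d - b * c != 0 ->
  is_pushforward a b c d e f v u -> is_pushforward a b c d e f w u' ->
  u' = mlA K11 K12 K21 K22 u -> exists M11 M12 M21 M22, w = mlA M11 M12 M21 M22 v.
Proof.
move=> hd Hu Hw Eu.
exists ((d * (K11 * a + K12 * c) - b * (K21 * a + K22 * c)) / (a * d - b * c)),
  ((d * (K11 * b + K12 * d) - b * (K21 * b + K22 * d)) / (a * d - b * c)),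
  ((- c * (K11 * a + K12 * c) + a * (K21 * a + K22 * c)) / (a * d - b * c)),
  ((- c * (K11 * b + K12 * d) + a * (K21 * b + K22 * d)) / (a * d - b * c)).
apply: (qvf_funP charR0) => q.
have [h1 h2] := Hu q; have [h3 h4] := Hw q.
set T := affT a b c d e f q in h1 h2 h3 h4.
have eP : vP w q = (d * vP u' T - b * vQ u' T) / (a * d - b * c) by rewrite h3 h4; field; exact: hd.
have eQ : vQ w q = (- c * vP u' T + a * vQ u' T) / (a * d - b * c) by rewrite h3 h4;field; exact: hd.
rewrite eP eQ Eu !mAP !mAQ h1 h2; split; field; exact: hd.
Qed.
End Work.

Section Work.
Variable R : closedFieldType.
Hypothesis charR0 : [pchar R] =i pred0.
Implicit Types v : qvf R.

Lemma norm_setup (u : qvf R) p1 p2 p3 p4 : sing_list u [:: p1; p2; p3; p4] ->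
  exists a b c d e f al be : R, [/\ a * d - b * c != 0, affT a b c d e f p1 = (0,0),
    affT a b c d e f p2 = (1,0), affT a b c d e f p3 = (0,1) &
    [/\ affT a b c d e f p4 = (al, be), al != 0, be != 0 & cross p1 p2 p3 != 0]].
Proof.
move=> hsl; have hsl' := hsl; case: hsl' => us hs.
move: (us); rewrite /= !inE !negb_or -!andbA => /and5P[n12 n13 n14 n23 /andP[n24 /andP[n34 _]]].
have s4 : size [:: p1; p2; p3; p4] = 4%N by [].
have hc : cross p1 p2 p3 != 0.
  by apply: (gen_pos charR0 hsl s4); rewrite ?inE ?eqxx ?orbT // eq_sym.
have [a [b [c [d [e [f [hd [h1 [h2 h3]]]]]]]]] := norm_ex hc.
have hpf := pf_exists e f hd u.
have sl := pf_sl hd hpf hsl; rewrite /= h1 h2 h3 in sl.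
case E4 : (affT a b c d e f p4) sl => [al be] sl.
exists a, b, c, d, e, f, al, be; split => //.
have [usl hsw] := sl.
move: (usl); rewrite /= !inE !negb_or -!andbA => /and5P[_ _ m14 _ /andP[m24 /andP[m34 _]]].
have sw4 : size [:: (0, 0); (1, 0); (0, 1); (al, be)] = 4%N by [].
have n01 : ((0 : R), (0 : R)) != (0, 1) by rewrite xpair_eqE eqxx /= eq_sym oner_eq0.
have n10 : ((0 : R), (0 : R)) != (1, 0) by rewrite xpair_eqE eqxx andbT eq_sym oner_eq0.
split => //.
  have := gen_pos charR0 sl sw4 (p := (0,0)) (q := (0,1)) (r := (al,be)).
  rewrite !inE !eqxx !orbT /cross /= n01 eq_sym m14 eq_sym m34 => /(_ isT isT isT isT isT isT).
  by apply: contra => /eqP ->; apply/eqP; ring.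
have := gen_pos charR0 sl sw4 (p := (0,0)) (q := (1,0)) (r := (al,be)).
rewrite !inE !eqxx !orbT /cross /= n10 eq_sym m14 eq_sym m24 => /(_ isT isT isT isT isT isT).
by apply: contra => /eqP ->; apply/eqP; ring.
Qed.

Lemma twin_unique v : fU v != 0 -> exists! w, twin v w.
Proof.
move=> hf; have [_ _ _ _ [hn4 htN hdN]] := fU_factors hf.
have [rs [sl szrs _ nd]] := sing4 hf.
move: [seq _ | _ <- rs] sl nd (size_map (fun z => (z, - (pmu v).[z] / (plam v).[z])) rs) => s sl nd szs.
rewrite szrs in szs.
set n1 := N1 v in htN hdN *; set n2 := N2 v in hdN *; set n3 := N3 v in hdN *; set n4 := N4 v in hn4 htN hdN *.
set t := - (n1 + n4) / (n1 * n4 - n2 * n3).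
have ht : t != 0 by rewrite /t mulf_neq0 ?oppr_eq0 ?invr_eq0.
have hdetA : (1 + t * n1) * (1 + t * n4) - t * n2 * (t * n3) = 1.
  by rewrite /t; field.
have hdetA' : (1 + t * n1) * (1 + t * n4) - t * n2 * (t * n3) != 0 by rewrite hdetA oner_eq0.
have [d0 d1 d2] := dotN v.
pose w := mlA (1 + t * n1) (t * n2) (t * n3) (1 + t * n4) v.
have slw : sing_list w s.
  by case: sl => us hs; split => // p; rewrite (mA_sing _ _ hdetA'); exact: hs.
exists w; split.
  split.
    move=> E; apply: (all_sing_false charR0 sl szs) => p.
    have e1 : t * (n1 * vP v p + n2 * vQ v p) = 0.
      by transitivity (vP w p - vP v p); [rewrite /w mAP; ring | rewrite -E subrr].
    have e2 : t * (n3 * vP v p + n4 * vQ v p) = 0.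
      by transitivity (vQ w p - vQ v p); [rewrite /w mAQ; ring | rewrite -E subrr].
    move/eqP: e1; rewrite mulf_eq0 (negPf ht) /= => /eqP e1.
    move/eqP: e2; rewrite mulf_eq0 (negPf ht) /= => /eqP e2.
    have f1 : (n1 * n4 - n2 * n3) * vP v p = 0.
      by transitivity (n4 * (n1 * vP v p + n2 * vQ v p) - n2 * (n3 * vP v p + n4 * vQ v p)); [ring | rewrite e1 e2; ring].
    have f2 : (n1 * n4 - n2 * n3) * vQ v p = 0.
      by transitivity (n1 * (n3 * vP v p + n4 * vQ v p) - n3 * (n1 * vP v p + n2 * vQ v p)); [ring | rewrite e1 e2; ring].
    by split; [move/eqP: f1 | move/eqP: f2]; rewrite mulf_eq0 (negPf hdN) => /eqP.
  split; first by exists s.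
  split; first by exists s.
  split; first by move=> p; rewrite (mA_sing _ _ hdetA').
  move=> p _; split; last by rewrite /w mAdet hdetA mul1r.
  apply/esym; rewrite /w mAtr.
  transitivity (trD v p + t * (n1 * vPx v p + n2 * vQx v p + n3 * vPy v p + n4 * vQy v p)); first by rewrite /trD; ring.
  by rewrite Lform d0 d1 d2; ring.
move=> w' [hne [_ [_ [hsing htd]]]].
case: s sl nd szs slw => [|p1 [|p2 [|p3 [|p4 [|]]]]] // sl nd _ slw.
have [a [b [c [d [e [f [al [be [hd g1 g2 g3 [g4 ha hb hc]]]]]]]]]] := norm_setup sl.
have Hu := pf_exists e f hd v; have Hw := pf_exists e f hd w'.
have sv : forall p, p \in [:: p1; p2; p3; p4] -> singular v p by move=> p /(sl.2 p).
have sw : forall p, p \in [:: p1; p2; p3; p4] -> singular w' p by move=> p /sv /hsing.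
have su : forall p, p \in [:: p1; p2; p3; p4] -> singular (pushw a b c d e f v) (affT a b c d e f p).
  by move=> p /sv; rewrite (pf_sing hd _ Hu).
have su' : forall p, p \in [:: p1; p2; p3; p4] -> singular (pushw a b c d e f w') (affT a b c d e f p).
  by move=> p /sw; rewrite (pf_sing hd _ Hw).
have i1 : p1 \in [:: p1; p2; p3; p4] by rewrite inE eqxx.
have i2 : p2 \in [:: p1; p2; p3; p4] by rewrite !inE eqxx !orbT.
have i3 : p3 \in [:: p1; p2; p3; p4] by rewrite !inE eqxx !orbT.
have i4 : p4 \in [:: p1; p2; p3; p4] by rewrite !inE eqxx !orbT.
have hD : detD (pushw a b c d e f v) (0,0) != 0.
  by rewrite -g1 (pf_trdet charR0 hd p1 Hu).2 nd.
have U1 : singular (pushw a b c d e f v) (0,0) by rewrite -g1; apply: su.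
have U2 : singular (pushw a b c d e f v) (1,0) by rewrite -g2; apply: su.
have U3 : singular (pushw a b c d e f v) (0,1) by rewrite -g3; apply: su.
have U4 : singular (pushw a b c d e f v) (al,be) by rewrite -g4; apply: su.
have W1 : singular (pushw a b c d e f w') (0,0) by rewrite -g1; apply: su'.
have W2 : singular (pushw a b c d e f w') (1,0) by rewrite -g2; apply: su'.
have W3 : singular (pushw a b c d e f w') (0,1) by rewrite -g3; apply: su'.
have W4 : singular (pushw a b c d e f w') (al,be) by rewrite -g4; apply: su'.
have [K11 [K12 [K21 [K22 EK]]]] := npencil charR0 ha hb U1 U2 U3 U4 W1 W2 W3 W4 hD.
have [M11 [M12 [M21 [M22 EM]]]] := pullback charR0 hd Hu Hw EK.
pose X1 := M11 - 1; pose X4 := M22 - 1.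
have trz : forall p, p \in [:: p1; p2; p3; p4] ->
    dot0 v X1 M12 M21 X4 + dot1 v X1 M12 M21 X4 * p.1 + dot2 v X1 M12 M21 X4 * p.2 = 0.
  move=> p hp; rewrite -Lform; have [e1 _] := htd p (sv p hp).
  move: e1; rewrite EM mAtr /trD => e1.
  transitivity ((M11 * vPx v p + M12 * vQx v p + M21 * vPy v p + M22 * vQy v p) - (vPx v p + vQy v p)).
    by rewrite /X1 /X4; ring.
  by rewrite -e1 subrr.
have [z0 z1 z2] := aff3 hc (trz _ i1) (trz _ i2) (trz _ i3).
have [k1 k2 k3] := kerN hn4 z0 z1 z2.
set s := X4 / N4 v in k1 k2 k3.
rewrite -/n1 -/n2 -/n3 in k1 k2 k3.
have k4 : X4 = s * n4 by rewrite /s divfK.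
have hdM : M11 * M22 - M12 * M21 = 1.
  have [_ e2] := htd p1 (sv _ i1); move: e2; rewrite EM mAdet => e2.
  apply: (mulIf (nd _ i1)); rewrite mul1r; exact: esym.
have hM11 : M11 = 1 + s * n1 by rewrite -k1 /X1; ring.
have hM22 : M22 = 1 + s * n4 by rewrite -k4 /X4; ring.
have hs0 : s != 0.
  apply: contra_not_neq hne => s0; apply: esym.
  by rewrite EM hM11 hM22 k2 k3 s0 !mul0r !addr0 mA_id.
have hst : s = t.
  have : s * ((n1 + n4) + s * (n1 * n4 - n2 * n3)) = 0.
    by transitivity (M11 * M22 - M12 * M21 - 1); [rewrite hM11 hM22 k2 k3; ring | rewrite hdM subrr].
  move/eqP; rewrite mulf_eq0 (negPf hs0) /= => /eqP h.
  rewrite /t; apply: (mulIf hdN); rewrite divfK //; apply/eqP; rewrite -subr_eq0 -[X in _ == X]h; apply/eqP; ring.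
by rewrite EM hM11 hM22 k2 k3 hst.
Qed.
End Work.

Section Work.
Variable R : closedFieldType.
Hypothesis charR0 : [pchar R] =i pred0.

Definition v0 : qvf R := mkq (fun k => nth 0 [:: 0; 0; 1; 1; -1; 0; 0; -1; 0; 0; 0; -1] k).

Lemma pr_v0 : pr v0 = 'X^4 + 'X^3 - 2%:R * 'X^2 + 'X.
Proof.
rewrite /pr /pmu /plam /pnu /pa0 /pa1 /pb0 /pb1 !coef_mkq //=.
ring.
Qed.

Lemma lam_v0 : plam v0 = 1 - 'X.
Proof. by rewrite /plam /pa1 /pb1 !coef_mkq //=; ring. Qed.

Lemma j_v0 : pj v0 = 1 - 3%:R * 'X + 3%:R * 'X^2 + 3%:R * 'X^3 - 2%:R * 'X^4.
Proof. by rewrite /pj /pmu /plam /pa0 /pa1 /pb0 /pb1 !coef_mkq //=; ring. Qed.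

Lemma dr_v0 : pdr v0 = 1 - 4%:R * 'X + 3%:R * 'X^2 + 4%:R * 'X^3.
Proof. by rewrite /pdr pr_v0 !derivE /=; ring. Qed.

Lemma bezout_res (p q u w : {poly R}) (g : R) : g != 0 -> u * p + w * q = g%:P -> resultant p q != 0.
Proof.
move=> g0 E; rewrite resultant_eq0 -leqNgt.
have : gcdp p q %| g%:P.
  by rewrite -E; apply: dvdp_add; apply: dvdp_mull; [exact: dvdp_gcdl | exact: dvdp_gcdr].
move/(dvdp_leq _) => h; apply: leq_trans (h _) _; first by rewrite polyC_eq0.
by rewrite size_polyC g0.
Qed.

Lemma size_eq (p : {poly R}) n : (size p <= n.+1)%N -> p`_n != 0 -> size p = n.+1.
Proof.
move=> h1 h2; apply/eqP; rewrite eqn_leq h1 /=; apply: contraT; rewrite -ltnNge ltnS => h.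
by move: h2; rewrite nth_default // eqxx.
Qed.

Lemma nat_neq0 n : (n.+1%:R : R) != 0.
Proof. exact: (natr_neq0 charR0). Qed.

Lemma neq_by (x y : R) : x = y -> y != 0 -> x != 0.
Proof. by move=> ->. Qed.

Lemma fU_v0 : fU v0 != 0.
Proof.
have c4 : (pr v0)`_4 = 1 by rewrite pr_v0 !coefE /=; ring.
have r4 : (pr v0)`_4 != 0 by rewrite c4 oner_eq0.
have szr : size (pr v0) = 5%N by apply: size_eq => //; exact: sz_r.
have szdr : size (pdr v0) = 4%N.
  apply: size_eq; first exact: sz_dr.
  by rewrite /pdr coef_deriv c4 nat_neq0.
have szl : size (plam v0) = 2%N.
  apply: size_eq; first exact: sz_lam.
  by apply: (neq_by (y := -1)); [rewrite lam_v0 !coefE /=; ring | rewrite oppr_eq0 oner_eq0].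
have szj : size (pj v0) = 5%N.
  apply: size_eq; first exact: sz_j.
  by apply: (neq_by (y := - 2%:R)); [rewrite j_v0 !coefE /=; ring | rewrite oppr_eq0 nat_neq0].
have eN1 : N1 v0 = - 2%:R by rewrite /N1 /det3 !coef_mkq //=; ring.
have eN2 : N2 v0 = - 4%:R by rewrite /N2 /det3 !coef_mkq //=; ring.
have eN3 : N3 v0 = - 4%:R by rewrite /N3 /det3 !coef_mkq //=; ring.
have eN4 : N4 v0 = 1 by rewrite /N4 /det3 !coef_mkq //=; ring.
rewrite /fU !mulf_neq0 //.
- by rewrite -(syl_resultant szr szdr); apply: (bezout_res (u := -74005%:R%:P + 6498%:R%:P * 'X + 37544%:R%:P * 'X^2)
    (w := -11191%:R%:P + 29241%:R%:P * 'X - 3971%:R%:P * 'X^2 - 9386%:R%:P * 'X^3) (g := - 11191%:R));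
    [rewrite oppr_eq0 nat_neq0 | rewrite pr_v0 dr_v0; ring].
- by rewrite -(syl_resultant szr szl); apply: (bezout_res (u := 1) (w := 1 + 2%:R * 'X^2 + 'X^3) (g := 1));
    [rewrite oner_eq0 | rewrite pr_v0 lam_v0; ring].
- by rewrite -(syl_resultant szr szj); apply: (bezout_res (u := 2340%:R%:P + 1944%:R%:P * 'X - 702%:R%:P * 'X^2 - 468%:R%:P * 'X^3)
    (w := 558%:R%:P - 666%:R%:P * 'X - 936%:R%:P * 'X^2 - 234%:R%:P * 'X^3) (g := 558%:R));
    [rewrite nat_neq0 | rewrite pr_v0 j_v0; ring].
- by rewrite eN4 oner_eq0.
- by apply: (neq_by (y := -1)); [rewrite eN1 eN4; ring | rewrite oppr_eq0 oner_eq0].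
- by apply: (neq_by (y := - 18%:R)); [rewrite eN1 eN2 eN3 eN4; ring | rewrite oppr_eq0 nat_neq0].
Qed.
End Work.

Theorem theorem1p3 (R : closedFieldType) (charR0 : [pchar R] =i pred0) :
  (forall v vt : qvf R,
     four_nondeg_sing v -> four_nondeg_sing vt -> same_spectra v vt ->
     exists (a b c d e f : R) (w : qvf R),
       a * d - b * c != 0 /\ is_pushforward a b c d e f vt w /\
       (w = v \/ twin v w)) /\
  (exists U : qvf R -> Prop,
     zariski_open U /\ (exists v, U v) /\
     forall v, U v -> exists! w, twin v w).
Proof.
split; first exact: (part1 charR0).
exists (fun v => fU v != 0); split.
  have [F HF] := @pf_fU R.
  exists [:: F] => v; split.
    by move=> h; exists F; rewrite ?mem_head // HF.
  by case=> g; rewrite inE => /eqP ->; rewrite HF.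
split; first by exists (v0 R); exact: fU_v0.
by move=> v; exact: twin_unique.
Qed.
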